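(* Let $n \ge 1$ and $0 \le k \le n$ be integers, and let $A_0, A_1$ be real symmetric $n\times n$ matrices with $A_1$ positive definite. Consider the sparse QCQP $$\mathcal{Q}:\quad \max\ x^{\intercal}A_0x \quad\text{s.t.}\quad x^{\intercal}A_1x = 1,\ x\in\mathbb{R}^n,\ |\mathrm{supp}(x)|\le k.$$ Let $p$ be an LPM polynomial of degree $k$ with nonnegative coefficients, and let $g(t) = p(A_1 t - A_0)$. Then there exists a feasible point $x$ of $\mathcal{Q}$ whose objective value $x^{\intercal}A_0x$ is at least $\eta_g$. In particular, $\eta_g$ is a lower bound for the optimal value of $\mathcal{Q}$.
   Context: $\mathrm{supp}(x) = \{i\in[n] : x_i\neq 0\}$. For a symmetric matrix $X$ and $S\subseteq[n]$, $X|_S$ denotes the principal submatrix of $X$ indexed by $S$. An LPM (linear combination of principal minors) polynomial of degree $k$ is a polynomial in the entries of a symmetric $n\times n$ matrix $X$ that is not identically zero and has the form $p(X)=\sum_{S\subseteq[n],|S|=k} a_S\det(X|_S)$ for real coefficients $a_S$. For a univariate polynomial $g$, $\eta_g$ denotes the largest real root of $g$, or $-\infty$ if $g$ has no real roots. *)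

(* Defs.v *)
From HB Require Import structures.
From mathcomp Require Import all_boot all_order all_algebra.
From mathcomp Require Import classical_sets boolp reals constructive_ereal ereal.
Set Implicit Arguments. Unset Strict Implicit. Unset Printing Implicit Defensive.
Import Order.TTheory GRing.Theory Num.Theory.
Local Open Scope ring_scope.
Local Open Scope classical_set_scope.

Definition principal_sub (T : Type) (n : nat) (X : 'M[T]_n) (S : {set 'I_n})
  : 'M[T]_#|S| := mxsub (@enum_val _ (mem S)) (@enum_val _ (mem S)) X.

Definition lpm (R : comNzRingType) (n k : nat) (a : {set 'I_n} -> R)
  (X : 'M[R]_n) : R :=
  \sum_(S : {set 'I_n} | #|S| == k) a S * \det (principal_sub X S).

Definition is_LPM (R : realType) (n k : nat) (a : {set 'I_n} -> R) : Prop :=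
  exists X : 'M[R]_n, X^T = X /\ lpm k a X != 0.

Definition lpm_pencil (R : realType) (n k : nat) (a : {set 'I_n} -> R)
  (A0 A1 : 'M[R]_n) : {poly R} :=
  lpm k (fun S => (a S)%:P) ('X *: map_mx polyC A1 - map_mx polyC A0).

(* eta_g: largest real root of g, or -oo if g has no real roots. *)
Definition eta_poly (R : realType) (g : {poly R}) : \bar R :=
  ereal_sup [set (t%:E)%E | t in [set t : R | root g t]].

Definition qform (R : realType) (n : nat) (A : 'M[R]_n) (x : 'cV[R]_n) : R :=
  (x^T *m A *m x) 0 0.

Definition supp (R : realType) (n : nat) (x : 'cV[R]_n) : {set 'I_n} :=
  [set i | x i 0 != 0].

Definition posdef (R : realType) (n : nat) (A : 'M[R]_n) : Prop :=
  A^T = A /\ forall x : 'cV[R]_n, x != 0 -> 0 < qform A x.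

(* Main.v *)
Require Import Defs.
From HB Require Import structures.
From mathcomp Require Import all_boot all_order all_algebra.
From mathcomp Require Import classical_sets boolp reals constructive_ereal ereal.
From mathcomp Require Import ring lra.
Import Order.TTheory GRing.Theory Num.Theory.
Local Open Scope ring_scope.
Set Implicit Arguments. Unset Strict Implicit.

Lemma qformD (R : realType) m (A B : 'M[R]_m) y :
  qform (A + B) y = qform A y + qform B y.
Proof. by rewrite /qform mulmxDr mulmxDl mxE. Qed.

Lemma qformZ (R : realType) m (c : R) (A : 'M[R]_m) y :
  qform (c *: A) y = c * qform A y.
Proof. by rewrite /qform -scalemxAr -scalemxAl mxE. Qed.

Lemma qformN (R : realType) m (A : 'M[R]_m) y :
  qform (- A) y = - qform A y.
Proof. by rewrite -scaleN1r qformZ mulN1r. Qed.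

Lemma qformZv (R : realType) m (c : R) (A : 'M[R]_m) y :
  qform A (c *: y) = c ^+ 2 * qform A y.
Proof. rewrite /qform.
have -> : (c *: y)^T = c *: y^T by apply/matrixP => i j; rewrite !mxE.
rewrite -!scalemxAl -scalemxAr !mxE. by rewrite mulrA expr2. Qed.

Lemma cV_neq0 (R : realType) m (y : 'cV[R]_m) : y != 0 -> exists i, y i 0 != 0.
Proof.
move=> ny; apply/existsP; apply: contraNT ny; rewrite negb_exists => /forallP H.
by apply/eqP/matrixP => i j; rewrite ord1 mxE; apply/eqP; have := H i; rewrite negbK.
Qed.

Lemma qform1_gt0 (R : realType) m (y : 'cV[R]_m) : y != 0 -> 0 < qform 1%:M y.
Proof.
move=> /cV_neq0 [i yi].
rewrite /qform mulmx1 mxE (bigD1 i) //= mxE.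
have h1 : 0 < y i 0 * y i 0 by rewrite lt_def mulf_neq0 // -expr2 sqr_ge0.
have h2 : 0 <= \sum_(j < m | j != i) y^T 0 j * y j 0.
  by apply: sumr_ge0 => j _; rewrite mxE -expr2 sqr_ge0.
lra.
Qed.

Definition pos_on (R : realType) m (M : 'M[R]_m) :=
  forall y : 'cV[R]_m, y != 0 -> 0 < qform M y.

Lemma pos_on_det_neq0 (R : realType) m (M : 'M[R]_m) : pos_on M -> \det M != 0.
Proof.
move=> H; apply/negP => /det0P [v nv vM].
have : v^T != 0 by rewrite trmx_eq0.
move/H; rewrite /qform trmxK vM mul0mx mxE ltxx //.
Qed.

Lemma det_pos (R : realType) m (M : 'M[R]_m) : pos_on M -> 0 < \det M.
Proof.
move=> H.
pose Np : 'M[{poly R}]_m := 'X *: map_mx polyC M + (1 - 'X) *: 1%:M.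
have ev : forall s, (\det Np).[s] = \det (s *: M + (1 - s) *: 1%:M).
  move=> s; rewrite -[_.[s]]/(horner_eval s _) -det_map_mx; congr (\det _).
  apply/matrixP => i j; rewrite !mxE /= /horner_eval.
  by case: (i == j); rewrite !hornerE.
have pos : forall s, 0 <= s <= 1 -> pos_on (s *: M + (1 - s) *: 1%:M).
  move=> s /andP [s0 s1] y ny; rewrite qformD !qformZ.
  have := H y ny; have := qform1_gt0 ny; nra.
rewrite ltNge; apply/negP => Hd.
have [x /andP [x0 x1]] : exists2 x, 0 <= x <= 1 & root (- \det Np) x.
  apply: poly_ivt => //; rewrite !hornerN !ev.
  rewrite scale0r add0r subr0 scale1r det1 scale1r subrr scale0r addr0.
  by rewrite oppr_le0 ler01 oppr_ge0.
rewrite rootN => /eqP; rewrite ev => /eqP.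
by apply/negP/pos_on_det_neq0/pos; rewrite x0 x1.
Qed.

Definition selm (R : realType) n (S : {set 'I_n}) : 'M[R]_(n, #|S|) :=
  \matrix_(i, j) (i == enum_val j)%:R.

Lemma selm_row (R : realType) n (S : {set 'I_n}) m (M : 'M[R]_(n, m)) j l :
  ((selm R S)^T *m M) j l = M (enum_val j) l.
Proof.
rewrite mxE (bigD1 (enum_val j)) //= !mxE eqxx mul1r big1 ?addr0 //.
by move=> i /negbTE ni; rewrite !mxE ni mul0r.
Qed.

Lemma selm_col (R : realType) n (S : {set 'I_n}) m (M : 'M[R]_(m, n)) j l :
  (M *m selm R S) j l = M j (enum_val l).
Proof.
rewrite mxE (bigD1 (enum_val l)) //= !mxE eqxx mulr1 big1 ?addr0 //.
by move=> i /negbTE ni; rewrite !mxE ni mulr0.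
Qed.

Lemma selm_sub (R : realType) n (S : {set 'I_n}) (M : 'M[R]_n) :
  (selm R S)^T *m M *m selm R S = principal_sub M S.
Proof. by apply/matrixP => i j; rewrite selm_col selm_row !mxE. Qed.

Lemma qform_selm (R : realType) n (S : {set 'I_n}) (M : 'M[R]_n) y :
  qform M (selm R S *m y) = qform (principal_sub M S) y.
Proof. by rewrite /qform trmx_mul !mulmxA -(mulmxA _ _ (selm R S)) -selm_sub !mulmxA. Qed.

Lemma selm_val (R : realType) n (S : {set 'I_n}) (y : 'cV[R]_#|S|) j :
  (selm R S *m y) (enum_val j) 0 = y j 0.
Proof.
rewrite mxE (bigD1 j) //= !mxE eqxx mul1r big1 ?addr0 //.
move=> i ni; rewrite !mxE.
case: eqP => [/enum_val_inj e|]; last by rewrite mul0r.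
by rewrite e eqxx in ni.
Qed.

Lemma selm_neq0 (R : realType) n (S : {set 'I_n}) (y : 'cV[R]_#|S|) :
  y != 0 -> selm R S *m y != 0.
Proof.
move=> /cV_neq0 [j yj]; apply/negP => /eqP e.
by move: yj; rewrite -selm_val e mxE eqxx.
Qed.

Lemma selm_supp (R : realType) n (S : {set 'I_n}) (y : 'cV[R]_#|S|) :
  supp (selm R S *m y) \subset S.
Proof.
apply/fintype.subsetP => i; rewrite inE; apply: contraNT => niS.
rewrite mxE big1 // => j _; rewrite !mxE.
case: eqP => [e|]; last by rewrite mul0r.
by move: niS; rewrite e enum_valP.
Qed.

Lemma g_eval (R : realType) n k (a : {set 'I_n} -> R) (A0 A1 : 'M[R]_n) t :
  (lpm_pencil k a A0 A1).[t] = lpm k a (t *: A1 - A0).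
Proof.
rewrite /lpm_pencil /lpm horner_sum; apply: eq_bigr => S _.
rewrite hornerM hornerC; congr (_ * _).
rewrite -[_.[t]]/(horner_eval t _) -det_map_mx; congr (\det _).
by apply/matrixP => i j; rewrite !mxE /= /horner_eval !hornerE.
Qed.

Lemma pos_sum (R : realType) n (P : pred {set 'I_n}) (a d : {set 'I_n} -> R) S0 :
  (forall S, 0 <= a S) -> (forall S, P S -> 0 < d S) -> P S0 -> 0 < a S0 ->
  0 < \sum_(S | P S) a S * d S.
Proof.
move=> a0 d0 PS0 aS0; rewrite (bigD1 S0) //=.
have h1 : 0 < a S0 * d S0 by rewrite mulr_gt0 // d0.
have h2 : 0 <= \sum_(S | P S && (S != S0)) a S * d S.
  by apply: sumr_ge0 => S /andP [PS _]; rewrite mulr_ge0 // ltW // d0.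
lra.
Qed.

Lemma pencil_sub (R : realType) n (A0 A1 : 'M[R]_n) (S : {set 'I_n}) :
  \det (principal_sub A1 S) != 0 ->
  \det (principal_sub ('X *: map_mx polyC A1 - map_mx polyC A0) S) =
  (\det (principal_sub A1 S))%:P * char_poly (invmx (principal_sub A1 S) *m principal_sub A0 S).
Proof.
move=> dn.
have U : principal_sub A1 S \in unitmx by rewrite unitmxE unitfE.
rewrite -det_map_mx /= /char_poly /char_poly_mx -det_mulmx mulmxBr mul_mx_scalar.
rewrite -map_mxM mulKVmx //; congr (\det _).
by apply/matrixP => i j; rewrite !mxE.
Qed.

Lemma g_coef (R : realType) n k (a : {set 'I_n} -> R) (A0 A1 : 'M[R]_n) :
  (forall S : {set 'I_n}, \det (principal_sub A1 S) != 0) ->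
  (lpm_pencil k a A0 A1)`_k = \sum_(S : {set 'I_n} | #|S| == k) a S * \det (principal_sub A1 S).
Proof.
move=> dn; rewrite /lpm_pencil /lpm coef_sum; apply: eq_bigr => S /eqP hS.
rewrite coefCM pencil_sub // coefCM.
have := char_poly_monic (invmx (principal_sub A1 S) *m principal_sub A0 S).
move/monicP; rewrite /lead_coef size_char_poly /= -hS => ->.
by rewrite mulr1.
Qed.

Lemma roots_list (R : realType) (p : {poly R}) :
  p != 0 -> exists s : seq R, forall x, root p x -> x \in s.
Proof.
move: {2}(size p) (leqnn (size p)) => m; elim: m p => [|m IH] p.
  by rewrite leqn0 size_poly_eq0 => /eqP ->; rewrite eqxx.
move=> sp pn.
case: (pselect (exists x, root p x)) => [[x0 rx0]|nr]; last first.
  by exists [::] => x rx; exfalso; apply: nr; exists x.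
case/factor_theorem: rx0 => q pq.
have qn : q != 0 by apply: contraNneq pn => q0; rewrite pq q0 mul0r.
have sq : (size q <= m)%N.
  move: sp; rewrite pq size_Mmonic ?monicXsubC // size_XsubC addn2 /=.
  by [].
have [s Hs] := IH q sq qn.
exists (x0 :: s) => x; rewrite pq rootM root_XsubC in_cons => /orP [/Hs ->|->].
  by rewrite orbT.
by [].
Qed.

Lemma seq_max (R : realType) (s : seq R) :
  s != [::] -> exists2 r, r \in s & forall t, t \in s -> t <= r.
Proof.
elim: s => [//|x s IH] _.
case: (eqVneq s [::]) => [->|sn].
  by exists x; rewrite ?inE ?eqxx // => t; rewrite inE => /eqP ->.
have [r rs Hr] := IH sn.
case: (leP x r) => xr.
  by exists r; rewrite ?inE ?rs ?orbT // => t; rewrite inE => /orP [/eqP ->|/Hr].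
exists x; rewrite ?inE ?eqxx // => t; rewrite inE => /orP [/eqP ->//|/Hr tr].
by rewrite (le_trans tr) // ltW.
Qed.

Lemma normalize (R : realType) n (A0 A1 : 'M[R]_n) (x : 'cV[R]_n) :
  0 < qform A1 x ->
  exists x', [/\ qform A1 x' = 1, supp x' = supp x &
              qform A0 x' = qform A0 x / qform A1 x].
Proof.
move=> c0; set c := qform A1 x.
have sc : 0 < Num.sqrt c by rewrite sqrtr_gt0.
have s2 : (Num.sqrt c)^-1 ^+ 2 = c^-1 by rewrite exprVn sqr_sqrtr // ltW.
exists ((Num.sqrt c)^-1 *: x); split.
- by rewrite qformZv s2 mulVf // gt_eqF.
- apply/setP => i; rewrite !inE mxE mulf_eq0 negb_or invr_eq0 gt_eqF //.
- by rewrite qformZv s2 mulrC.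
Qed.
Unset Implicit Arguments. Set Strict Implicit.

Theorem mainTheorem1 (R : realType) (n k : nat) (A0 A1 : 'M[R]_n)
  (a : {set 'I_n} -> R) :
  (1 <= n)%N -> (1 <= k <= n)%N ->
  A0^T = A0 -> posdef A1 ->
  is_LPM k a -> (forall S : {set 'I_n}, 0 <= a S) ->
  exists x : 'cV[R]_n,
    [/\ qform A1 x = 1, (#|supp x| <= k)%N &
        (eta_poly (lpm_pencil k a A0 A1) <= (qform A0 x)%:E)%E].
Proof.
move=> n1 /andP [k1 kn] symA0 [symA1 pdA1] [X [_ LX]] a0.
set g := lpm_pencil k a A0 A1.
have [S0 [hS0 aS0]] : exists S0 : {set 'I_n}, #|S0| == k /\ 0 < a S0.
  case: (pselect (exists S0 : {set 'I_n}, #|S0| == k /\ 0 < a S0)) => // nS.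
  exfalso; move/negP: LX; apply; apply/eqP; rewrite /lpm big1 // => S hS.
  have -> : a S = 0.
    apply/eqP; rewrite eq_le a0 andbT leNgt; apply/negP => aS.
    by apply: nS; exists S.
  by rewrite mul0r.
have pdS : forall S : {set 'I_n}, pos_on (principal_sub A1 S).
  by move=> S y ny; rewrite -qform_selm; apply/pdA1/selm_neq0.
have dS : forall S : {set 'I_n}, \det (principal_sub A1 S) != 0.
  by move=> S; rewrite gt_eqF // det_pos.
have gn : g != 0.
  apply/eqP => g0; have := g_coef k a A0 dS; rewrite -/g g0 coef0 => e.
  have := @pos_sum R n (fun S => #|S| == k) a (fun S => \det (principal_sub A1 S)) S0 a0.
  have H : forall S : {set 'I_n}, #|S| == k -> 0 < \det (principal_sub A1 S).
    by move=> S _; apply: det_pos.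
  by move/(_ H hS0 aS0); rewrite -e ltxx.
suff [x [x1 xs xr]] : exists x : 'cV[R]_n, [/\ qform A1 x = 1, (#|supp x| <= k)%N &
    forall t, root g t -> t <= qform A0 x].
  exists x; split => //; rewrite /eta_poly; apply: ge_ereal_sup => z [t rt <-].
  by rewrite lee_fin; apply: xr.
case: (pselect (exists t, root g t)) => [[t0 rt0]|nr]; last first.
  pose i0 : 'I_n := Ordinal n1.
  pose e : 'cV[R]_n := delta_mx i0 0.
  have en : e != 0.
    apply/negP => /eqP/matrixP/(_ i0 0); rewrite !mxE !eqxx /= => /eqP.
    by rewrite oner_eq0.
  have [x' [x1 xs _]] := normalize A0 (pdA1 e en).
  exists x'; split => //; last by move=> t rt; exfalso; apply: nr; exists t.
  rewrite xs; apply: leq_trans k1.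
  rewrite -(cards1 i0); apply: subset_leq_card; apply/fintype.subsetP => i.
  by rewrite !inE mxE; case: (i == i0); rewrite //= eqxx.
have [s Hs] := roots_list gn.
have [r rs Hr] : exists2 r, r \in [seq t <- s | root g t] & forall t, t \in [seq t <- s | root g t] -> t <= r.
  apply: seq_max; apply/eqP => e.
  have : t0 \in [seq t <- s | root g t] by rewrite mem_filter rt0 Hs.
  by rewrite e.
have rr : root g r by move: rs; rewrite mem_filter => /andP [].
have Hr' : forall t, root g t -> t <= r.
  by move=> t rt; apply: Hr; rewrite mem_filter rt Hs.
case: (pselect (exists x : 'cV[R]_n, [/\ qform A1 x = 1, (#|supp x| <= k)%N & r <= qform A0 x])) => [[x [x1 xs xr]]|nx].
  by exists x; split => // t /Hr' tr; apply: le_trans xr.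
exfalso.
have hn : forall x, qform A1 x = 1 -> (#|supp x| <= k)%N -> qform A0 x < r.
  move=> x x1 xs; rewrite ltNge; apply/negP => xr; apply: nx; by exists x.
move: rr; rewrite /root g_eval /lpm; apply/negP; rewrite gt_eqF //.
apply: (@pos_sum R n (fun S => #|S| == k) a _ S0) => // S /eqP hS.
apply: det_pos => y ny.
rewrite -qform_selm qformD qformZ qformN.
set x := selm R S *m y.
have xn : x != 0 by apply: selm_neq0.
have c0 := pdA1 x xn.
have [x' [x1 xs xq]] := normalize A0 c0.
have xk : (#|supp x'| <= k)%N.
  by rewrite xs -hS; apply: subset_leq_card; apply: selm_supp.
have := hn x' x1 xk; rewrite xq ltr_pdivrMr //.
lra.
Qed.
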